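(* Let $H$ be the graph consisting of two vertex-disjoint triangles $v_1v_2v_3$ and $w_1w_2w_3$ together with the edge $v_3w_1$. Let $n\ge 7$ and let $G$ be a graph with $n$ vertices obtained from $H$ by attaching $n-6$ pendant edges (new leaves) to vertices of $H$, none of them to $v_3$ or $w_1$. Then $\operatorname{avm}(G)>\operatorname{avm}(T_n^1(3,3))$.
   Context: $\operatorname{avm}(G)$ is the average of $|M|$ over all maximal matchings $M$ of $G$ (a matching is maximal if not properly contained in another matching). $T_n^1(3,3)$ is the graph obtained from $H$ by attaching $n-6$ pendant edges (new leaves) to $v_3$. *)

(* Defs.v *)
From mathcomp Require Import all_boot all_order all_algebra.
Set Implicit Arguments. Unset Strict Implicit. Unset Printing Implicit Defensive.
Import GRing.Theory Num.Theory.

Section Matchings.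
Variables (V : finType) (e : rel V).

Definition edges : {set {set V}} := [set f : {set V} | [exists x : V, exists y : V, e x y && (f == [set x; y])]].

Definition is_matching (M : {set {set V}}) : bool :=
  (M \subset edges) &&
  [forall f in M, forall g in M, (f != g) ==> [disjoint f & g]].

Definition is_maximal_matching (M : {set {set V}}) : bool :=
  is_matching M &&
  [forall N : {set {set V}}, (is_matching N && (M \subset N)) ==> (N == M)].

Definition maximal_matchings : {set {set {set V}}} :=
  [set M | is_maximal_matching M].

Definition avm : rat :=
  (\sum_(M in maximal_matchings) #|M|)%:R / #|maximal_matchings|%:R.
End Matchings.

(* ---------- The graphs of Lemma 4.2 ----------
   Vertices of H: 0 = v1, 1 = v2, 2 = v3, 3 = w1, 4 = w2, 5 = w3.
   Vertices 6 .. n-1 are the added leaves; leaf i is attached to H-vertex att i. *)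
Definition hedge (i j : nat) : bool :=
  (i, j) \in [:: (0,1); (1,2); (0,2); (3,4); (4,5); (3,5); (2,3)].

Definition gadj (n : nat) (att : nat -> nat) : rel 'I_n :=
  fun x y =>
    [|| hedge x y, hedge y x,
        (6 <= x) && (nat_of_ord y == att x)
      | (6 <= y) && (nat_of_ord x == att y)].

Arguments gadj : clear implicits.

(* T_n^1(3,3): all n-6 leaves attached to v3 (vertex 2) *)
Definition T1_33 (n : nat) : rel 'I_n := gadj n (fun _ => 2).
Arguments T1_33 : clear implicits.

(* Main.v *)
Require Import Defs.
From mathcomp Require Import all_boot all_order all_algebra.
From mathcomp Require Import zify.
Import GRing.Theory Num.Theory.
Set Implicit Arguments. Unset Strict Implicit. Unset Printing Implicit Defensive.

Section Gen.
Variables (V : finType) (e : rel V).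

Lemma matchingP (M : {set {set V}}) :
  reflect (M \subset edges e /\ forall f g, f \in M -> g \in M -> f != g -> [disjoint f & g])
          (is_matching e M).
Proof.
apply: (iffP andP) => [[H1 /forall_inP H2]|[H1 H2]]; split => //.
- by move=> f g fM gM fg; move/forall_inP: (H2 f fM) => /(_ g gM) /implyP; apply.
- by apply/forall_inP => f fM; apply/forall_inP => g gM; apply/implyP; apply: H2.
Qed.

Lemma edge_ne0 f : f \in edges e -> exists x, x \in f.
Proof.
rewrite inE => /existsP [x /existsP [y /andP [_ /eqP ->]]].
by exists x; rewrite !inE eqxx.
Qed.

Lemma maximalP (M : {set {set V}}) :
  reflect (is_matching e M /\ forall f, f \in edges e -> exists2 g, g \in M & ~~ [disjoint f & g])
          (is_maximal_matching e M).
Proof.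
apply: (iffP andP) => [[HM /forallP HN]|[HM Hc]]; split => //.
- move=> f fE; apply/exists_inP.
  case: (boolP [exists g in M, ~~ [disjoint f & g]]) => // /exists_inPn Hno.
  have Hd : forall g, g \in M -> [disjoint f & g].
    by move=> g gM; apply/negPn; apply: Hno.
  have := HN (f |: M); rewrite subsetUr andbT.
  case/matchingP: HM => HMs HMd.
  have -> : is_matching e (f |: M).
    apply/matchingP; split.
      by rewrite subUset sub1set fE HMs.
    move=> f1 g1; rewrite !in_setU1 => /orP [/eqP->|f1M] /orP [/eqP->|g1M]; rewrite ?eqxx //.
    - by move=> _; apply: Hd.
    - by move=> _; rewrite disjoint_sym; apply: Hd.
    - exact: HMd.
  move=> /= /eqP HfM.
  have fM : f \in M by rewrite -HfM setU11.
  have := Hd f fM; case: (edge_ne0 fE) => x xf.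
  by move/disjointFr => /(_ x xf); rewrite xf.
- apply/forallP => N; apply/implyP => /andP [HN sMN].
  rewrite eqEsubset andbC sMN /=; apply/subsetP => f fN.
  case/matchingP: HN => HNs HNd.
  have fE : f \in edges e by apply: (subsetP HNs).
  case: (Hc f fE) => g gM Hfg.
  case: (eqVneq f g) => [->//|fg].
  by move: (HNd f g fN (subsetP sMN g gM) fg); rewrite (negbTE Hfg).
Qed.
End Gen.

Definition EL : seq (nat * nat) := [:: (0,1); (1,2); (0,2); (3,4); (4,5); (3,5); (2,3)].
Definition ea (k : nat) := (nth (0,0) EL k).1.
Definition eb (k : nat) := (nth (0,0) EL k).2.
Definition L20 : seq (seq bool) := [:: [:: false; false; false; false; false; false; false]; [:: false; false; false; false; false; false; true]; [:: false; false; false; false; false; true; false]; [:: false; false; false; false; true; false; false]; [:: false; false; false; false; true; false; true]; [:: false; false; false; true; false; false; false]; [:: false; false; true; false; false; false; false]; [:: false; false; true; false; false; true; false]; [:: false; false; true; false; true; false; false]; [:: false; false; true; true; false; false; false]; [:: false; true; false; false; false; false; false]; [:: false; true; false; false; false; true; false]; [:: false; true; false; false; true; false; false]; [:: false; true; false; true; false; false; false]; [:: true; false; false; false; false; false; false]; [:: true; false; false; false; false; false; true]; [:: true; false; false; false; false; true; false]; [:: true; false; false; false; true; false; false]; [:: true; false; false; false; true; false; true]; [:: true; false; false; true; false; false; false]].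
Definition bit (j k : nat) := nth false (nth [::] L20 j) k.
Definition covb (j x : nat) := has (fun k => bit j k && ((ea k == x) || (eb k == x))) (iota 0 7).
Definition share (k k' : nat) := [|| ea k == ea k', ea k == eb k', eb k == ea k' | eb k == eb k'].

Definition i7 := iota 0 7.
Definition i20 := iota 0 20.

Lemma chk_edge : all (fun k => [&& ea k < 6, eb k < 6, ea k != eb k & hedge (ea k) (eb k)]) i7.
Proof. by []. Qed.
Lemma chk_match : all (fun j => all (fun k => all (fun k' =>
   (k != k') && bit j k && bit j k' ==> ~~ share k k') i7) i7) i20.
Proof. by []. Qed.
Lemma chk_Einj : all (fun k => all (fun k' => (k != k') ==>
   ((ea k, eb k) != (ea k', eb k')) && ((ea k, eb k) != (eb k', ea k'))) i7) i7.
Proof. by []. Qed.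
Lemma chk_rows : all (fun j => all (fun j' => (j != j') ==> has (fun k => bit j k != bit j' k) i7) i20) i20.
Proof. by []. Qed.
Definition cfs (bs : seq bool) := all (fun k => all (fun k' =>
   (k != k') && share k k' ==> ~~ (nth false bs k && nth false bs k')) i7) i7.
Lemma chk_find : forall b0 b1 b2 b3 b4 b5 b6 : bool,
  cfs [:: b0; b1; b2; b3; b4; b5; b6] ==>
  has (fun j => all (fun k => bit j k == nth false [:: b0; b1; b2; b3; b4; b5; b6] k) i7) i20.
Proof. by do 7 case. Qed.
Lemma chk_hedge x y : hedge x y -> exists2 k, k < 7 & x = ea k /\ y = eb k.
Proof.
rewrite /hedge => H; exists (index (x, y) EL); first by rewrite -[7]/(size EL) index_mem.
by rewrite /ea /eb nth_index.
Qed.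

Lemma sum_option (T : finType) (F : option T -> nat) : \sum_x F x = F None + \sum_y F (Some y).
Proof.
rewrite /index_enum !unlock /=. congr (_ + _). rewrite /reducebig foldr_map !unlock. reflexivity.
Qed.

Lemma i7P k : (k \in i7) = (k < 7). Proof. by rewrite mem_iota. Qed.
Lemma i20P k : (k \in i20) = (k < 20). Proof. by rewrite mem_iota. Qed.

Lemma edge_fact k : k < 7 -> [&& ea k < 6, eb k < 6, ea k != eb k & hedge (ea k) (eb k)].
Proof. by move=> hk; move/allP: chk_edge => /(_ k); rewrite i7P; apply. Qed.

Lemma set2_eq (T : finType) (a b c d : T) : [set a; b] = [set c; d] -> (a = c /\ b = d) \/ (a = d /\ b = c).
Proof.
move=> H.
have ha : a \in [set c; d] by rewrite -H set21.
have hb : b \in [set c; d] by rewrite -H set22.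
have hc : c \in [set a; b] by rewrite H set21.
have hd : d \in [set a; b] by rewrite H set22.
case/set2P: ha => ea; case/set2P: hb => eb; subst; auto;
  case/set2P: hc => ?; case/set2P: hd => ?; subst; auto.
Qed.

Lemma E_idx_inj k k' : k < 7 -> k' < 7 -> (ea k = ea k' /\ eb k = eb k') \/ (ea k = eb k' /\ eb k = ea k') -> k = k'.
Proof.
move=> hk hk' H; apply/eqP; apply: contraT => nk.
move/allP: chk_Einj => /(_ k); rewrite i7P => /(_ hk) /allP /(_ k'); rewrite i7P => /(_ hk').
rewrite nk /= => /andP [h1 h2].
by case: H => [[e1 e2]|[e1 e2]]; [rewrite e1 e2 eqxx in h1|rewrite e1 e2 eqxx in h2].
Qed.

Definition uzc (c : nat -> nat) j x := ~~ covb j x && (c x == 0).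
Definition validc (c : nat -> nat) j := all (fun k => ~~ (uzc c j (ea k) && uzc c j (eb k))) i7.
Definition Wc (c : nat -> nat) j i := if covb j i then 1 else (c i == 0) + c i.
Definition Kc (c : nat -> nat) j := \sum_(k < 7) bit j k + \sum_(i < 6) (~~ covb j i && (c i != 0)).
Definition NF (c : nat -> nat) := \sum_(j < 20) validc c j * \prod_(i < 6) Wc c j i.
Definition SF (c : nat -> nat) := \sum_(j < 20) validc c j * Kc c j * \prod_(i < 6) Wc c j i.

Lemma covbP j x : reflect (exists k, [/\ k < 7, bit j k & (ea k = x \/ eb k = x)]) (covb j x).
Proof.
apply: (iffP hasP) => [[k]|[k [hk hb he]]].
  by rewrite i7P => hk /andP [hb /orP [/eqP|/eqP]]; exists k; split; auto.
by exists k; rewrite ?i7P // hb; case: he => ->; rewrite eqxx ?orbT.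
Qed.

Section Frame.
Variable n' : nat.
Local Notation n := n'.+1.
Hypothesis Hn : 6 <= n'.
Variable att : nat -> nat.
Hypothesis Hatt : forall l : 'I_n, 6 <= l -> att l < 6.
Local Notation G := (gadj n att).

Definition hv (x : nat) : 'I_n := inord x.
Lemma hvK x : x < 6 -> (hv x : nat) = x.
Proof. by move=> hx; rewrite /hv inordK // (leq_trans hx (leqW Hn)). Qed.
Lemma hv_inj x y : x < 6 -> y < 6 -> hv x = hv y -> x = y.
Proof. by move=> hx hy /(congr1 (@nat_of_ord _)); rewrite !hvK. Qed.
Lemma hv_val (v : 'I_n) : v < 6 -> hv v = v.
Proof. by move=> hv6; apply: val_inj; rewrite /= hvK. Qed.

Definition E k : {set 'I_n} := [set hv (ea k); hv (eb k)].
Lemma E_small k v : k < 7 -> v \in E k -> v < 6.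
Proof.
move=> hk; case/and4P: (edge_fact hk) => h1 h2 _ _.
by case/set2P => ->; rewrite hvK.
Qed.

Definition LE (l : 'I_n) : {set 'I_n} := [set l; hv (att l)].

Lemma edgeP f : reflect ((exists2 k, k < 7 & f = E k) \/
                         (exists2 l : 'I_n, 6 <= l & f = LE l)) (f \in edges G).
Proof.
apply: (iffP idP).
- rewrite inE => /existsP [x /existsP [y /andP [Hxy /eqP ->]]].
  case/or4P: Hxy.
  + case/chk_hedge => k hk [hx hy]; left; exists k => //.
    case/and4P: (edge_fact hk) => h1 h2 _ _.
    have ex : hv (ea k) = x by rewrite -hx hv_val // hx.
    have ey : hv (eb k) = y by rewrite -hy hv_val // hy.
    by rewrite /E ex ey.
  + case/chk_hedge => k hk [hx hy]; left; exists k => //.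
    case/and4P: (edge_fact hk) => h1 h2 _ _.
    have ex : hv (ea k) = y by rewrite -hx hv_val // hx.
    have ey : hv (eb k) = x by rewrite -hy hv_val // hy.
    by rewrite /E ex ey setUC.
  + case/andP => hx /eqP hy; right; exists x => //.
    by rewrite /LE -hy hv_val // hy Hatt.
  + case/andP => hy /eqP hx; right; exists y => //.
    by rewrite /LE setUC -hx hv_val // hx Hatt.
- case=> [[k hk ->]|[l hl ->]]; rewrite inE.
  + apply/existsP; exists (hv (ea k)); apply/existsP; exists (hv (eb k)).
    case/and4P: (edge_fact hk) => h1 h2 _ h4.
    by rewrite eqxx andbT /gadj !hvK // h4.
  + apply/existsP; exists l; apply/existsP; exists (hv (att l)).
    by rewrite eqxx andbT /gadj hvK ?Hatt // hl eqxx !orbT.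
Qed.

Lemma E_inj k k' : k < 7 -> k' < 7 -> E k = E k' -> k = k'.
Proof.
move=> hk hk' H; apply: E_idx_inj => //.
case/and4P: (edge_fact hk) => h1 h2 _ _; case/and4P: (edge_fact hk') => h1' h2' _ _.
case: (set2_eq H) => [[e1 e2]|[e1 e2]]; [left|right];
  split; apply: hv_inj => //.
Qed.

Lemma leaf_notE k (l : 'I_n) : k < 7 -> 6 <= l -> l \notin E k.
Proof. by move=> hk hl; apply/negP => /(E_small hk); rewrite ltnNge hl. Qed.

Lemma E_neq_LE k (l : 'I_n) : k < 7 -> 6 <= l -> E k != LE l.
Proof. by move=> hk hl; apply/eqP => H; move: (leaf_notE hk hl); rewrite H /LE set21. Qed.

Lemma hv_in_E x k : x < 6 -> k < 7 -> hv x \in E k -> ea k = x \/ eb k = x.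
Proof.
move=> hx hk; case/and4P: (edge_fact hk) => h1 h2 _ _.
by case/set2P => /hv_inj H; [left|right]; symmetry; apply: H.
Qed.

Lemma hv_in_LE x (l : 'I_n) : x < 6 -> 6 <= l -> hv x \in LE l -> att l = x.
Proof.
move=> hx hl; case/set2P => [H|/hv_inj H]; last by symmetry; apply: H; rewrite ?Hatt.
by move: hl; rewrite -H hvK // leqNgt hx.
Qed.

Lemma leaf_in_LE (l l' : 'I_n) : 6 <= l -> 6 <= l' -> l \in LE l' -> l = l'.
Proof.
move=> hl hl'; case/set2P => // H; move: hl.
by rewrite H hvK ?Hatt // leqNgt Hatt.
Qed.

Lemma in_match (M : {set {set 'I_n}}) g1 g2 v :
  is_matching G M -> g1 \in M -> g2 \in M -> v \in g1 -> v \in g2 -> g1 = g2.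
Proof.
case/matchingP => _ Hd h1 h2 v1 v2; apply/eqP; apply: contraT => ne.
by move: (Hd _ _ h1 h2 ne) => /disjointFr /(_ v1); rewrite v2.
Qed.

Definition cnt x := #|[set l : 'I_n | (6 <= l) && (att l == x)]|.
Lemma cnt_pos (l : 'I_n) : 6 <= l -> cnt (att l) != 0.
Proof. by move=> hl; rewrite -lt0n card_gt0; apply/set0Pn; exists l; rewrite inE hl eqxx. Qed.

Definition ind j (i : nat) (ox : option 'I_n) :=
  if covb j i then ox == None else
  if ox is Some l then (6 <= l) && (att l == i) else cnt i == 0.

Definition dm (t : 'I_20 * {ffun 'I_6 -> option 'I_n}) :=
  validc cnt t.1 && [forall i : 'I_6, ind t.1 i (t.2 i)].

Definition HP j := [set E (val k) | k in [pred k : 'I_7 | bit j k]].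
Definition LP (o : {ffun 'I_6 -> option 'I_n}) :=
  [set [set hv i; odflt (hv i) (o i)] | i : 'I_6 in [pred i : 'I_6 | o i != None]].
Definition Psi (t : 'I_20 * {ffun 'I_6 -> option 'I_n}) := HP t.1 :|: LP t.2.

Lemma HPP j f : reflect (exists2 k, k < 7 /\ bit j k & f = E k) (f \in HP j).
Proof.
apply: (iffP imsetP) => [[k hk ->]|[k [hk hb] ->]]; first by exists k.
by exists (Ordinal hk).
Qed.

Lemma LPP (o : {ffun 'I_6 -> option 'I_n}) f : reflect (exists i : 'I_6, exists2 l, o i = Some l & f = [set hv i; l]) (f \in LP o).
Proof.
apply: (iffP imsetP) => [[i]|[i [l hl ->]]].
  by rewrite inE; case E: (o i) => //= [l] _ ->; exists i, l.
by exists i; rewrite ?inE hl.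
Qed.

Lemma LE_sym (l : 'I_n) : LE l = [set hv (att l); l].
Proof. by rewrite /LE setUC. Qed.

Lemma notdisj (f g : {set 'I_n}) v : v \in f -> v \in g -> ~~ [disjoint f & g].
Proof. by move=> vf vg; apply/negP => /disjointFr /(_ vf); rewrite vg. Qed.

Lemma disjP (f g : {set 'I_n}) : (forall v, v \in f -> v \in g -> False) -> [disjoint f & g].
Proof. by move=> H; rewrite disjoint_subset; apply/subsetP => v vf; rewrite inE; apply/negP; apply: H. Qed.

Section WithT.
Variables (j : 'I_20) (o : {ffun 'I_6 -> option 'I_n}).
Hypothesis Hdm : dm (j, o).

Lemma Hval : validc cnt j. Proof. by case/andP: Hdm. Qed.
Lemma Hind (i : 'I_6) : ind j i (o i). Proof. by case/andP: Hdm => _ /forallP. Qed.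

Lemma ind_some (i : 'I_6) l : o i = Some l -> [/\ ~~ covb j i, 6 <= l & att l = i].
Proof.
move=> E0; have := Hind i; rewrite /ind E0.
by case: (covb j i) => //= /andP [-> /eqP ->].
Qed.

Lemma ind_none (i : 'I_6) : o i = None -> ~~ covb j i -> cnt i = 0.
Proof. by move=> E0 nc; have := Hind i; rewrite /ind E0 (negbTE nc) => /eqP. Qed.

Lemma LP_LE f : f \in LP o -> exists i : 'I_6, exists2 l : 'I_n, o i = Some l & f = LE l /\ 6 <= l.
Proof.
case/LPP => i [l hl ->]; exists i, l => //.
by case: (ind_some hl) => _ h6 ha; rewrite LE_sym ha.
Qed.

Lemma cover_x x : x < 6 -> covb j x || (cnt x != 0) -> exists2 g, g \in Psi (j, o) & hv x \in g.
Proof.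
move=> hx; case: (boolP (covb j x)) => [/covbP [k [hk hb he]]|nc] /= H.
  exists (E k); first by rewrite inE; apply/orP; left; apply/HPP; exists k.
  by case: he => <-; rewrite /E ?set21 ?set22.
case E0: (o (Ordinal hx)) => [l|].
  exists [set hv x; l]; last by rewrite set21.
  by rewrite inE; apply/orP; right; apply/LPP; exists (Ordinal hx), l.
by move: (ind_none E0 nc) H => /= ->.
Qed.

Lemma Psi_max : is_maximal_matching G (Psi (j, o)).
Proof.
apply/maximalP; split.
  apply/matchingP; split.
    apply/subsetP => f; rewrite inE => /orP [/HPP [k [hk _] ->]|/LP_LE [i [l _ [-> hl]]]];
      apply/edgeP; [left; exists k | right; exists l] => //.
  move=> f g; rewrite !inE => Hf Hg fg; apply: disjP => v vf vg.
  have key : forall f g, f \in HP j -> g \in LP o -> v \in f -> v \in g -> False.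
    move=> f1 g1 /HPP [k [hk hb] ->] /LPP [i [l hl ->]] vf1 vg1.
    case: (ind_some hl) => nc hl6 _.
    have v6 := E_small hk vf1.
    case/set2P: vg1 => ev; last by move: hl6; rewrite -ev leqNgt v6.
    move: vf1; rewrite ev => /(hv_in_E (ltn_ord i) hk) he.
    by move/negP: nc; apply; apply/covbP; exists k.
  case/orP: Hf => Hf; case/orP: Hg => Hg.
  - case/HPP: Hf => k [hk hb] ef; case/HPP: Hg => k' [hk' hb'] eg.
    have kk : k != k' by apply: contraNneq fg => kk; rewrite ef eg kk.
    rewrite ef in vf; rewrite eg in vg.
    have v6 := E_small hk vf.
    rewrite -(hv_val v6) in vf vg.
    have e1 := hv_in_E v6 hk vf.
    have e2 := hv_in_E v6 hk' vg.
    move/allP: chk_match => /(_ j); rewrite i20P ltn_ord => /(_ isT) /allP /(_ k).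
    rewrite i7P hk => /(_ isT) /allP /(_ k'); rewrite i7P hk' kk hb hb' => /(_ isT) /=.
    by rewrite /share; case: e1 => ->; case: e2 => ->; rewrite eqxx ?orbT.
  - exact: (key f g).
  - exact: (key g f).
  - case/LP_LE: Hf => i [l hl [ef hl6]]; case/LP_LE: Hg => i' [l' hl' [eg hl6']].
    suff ll : l = l' by move/eqP: fg; apply; rewrite ef eg ll.
    case: (ltnP v 6) => v6.
    + move: vf vg; rewrite ef eg -(hv_val v6) => /(hv_in_LE v6 hl6) a1 /(hv_in_LE v6 hl6') a2.
      case: (ind_some hl) => _ _ a3; case: (ind_some hl') => _ _ a4.
      have ii : i = i' by apply: ord_inj; rewrite -a3 -a4 a1 a2.
      by move: hl'; rewrite -ii hl => -[].
    + rewrite ef in vf; rewrite eg in vg.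
      by rewrite -(leaf_in_LE v6 hl6 vf) (leaf_in_LE v6 hl6' vg).
move=> f /edgeP [[k hk ->]|[l hl ->]].
  case/and4P: (edge_fact hk) => h1 h2 _ _.
  move/allP: Hval => /(_ k); rewrite i7P hk => /(_ isT).
  rewrite /uzc negb_and !negb_and !negbK => /orP [H|H].
    by case: (cover_x h1 H) => g gP vg; exists g => //; apply: (notdisj _ vg); rewrite set21.
  by case: (cover_x h2 H) => g gP vg; exists g => //; apply: (notdisj _ vg); rewrite set22.
have := cnt_pos hl => H.
case: (cover_x (Hatt hl) (introT orP (or_intror H))) => g gP vg.
by exists g => //; apply: (notdisj _ vg); rewrite /LE set22.
Qed.

End WithT.

Lemma notdisjP (f g : {set 'I_n}) : ~~ [disjoint f & g] -> exists v, v \in f /\ v \in g.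
Proof.
rewrite disjoint_subset => /subsetPn [v vf]; rewrite inE negbK => vg; by exists v.
Qed.

Lemma share_common k k' : share k k' -> exists v, v \in E k /\ v \in E k'.
Proof.
rewrite /share => /or4P [] /eqP e.
- by exists (hv (ea k)); split; rewrite /E ?set21 // e set21.
- by exists (hv (ea k)); split; rewrite /E ?set21 // e set22.
- by exists (hv (eb k)); split; rewrite /E ?set22 // e set21.
- by exists (hv (eb k)); split; rewrite /E ?set22 // e set22.
Qed.

Lemma MM_Psi M : is_maximal_matching G M -> exists t, dm t /\ M = Psi t.
Proof.
move=> HMM; case/maximalP: (HMM) => HM Hc; case/matchingP: (HM) => Hs Hd.
pose b k := E k \in M.
have nthb : forall k, k < 7 -> nth false [:: b 0; b 1; b 2; b 3; b 4; b 5; b 6] k = b k.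
  by case=> [|[|[|[|[|[|[|k]]]]]]].
have Ecf : cfs [:: b 0; b 1; b 2; b 3; b 4; b 5; b 6].
  apply/allP => k; rewrite i7P => hk; apply/allP => k'; rewrite i7P => hk'.
  apply/implyP => /andP [kk sh]; rewrite !nthb //; apply/negP => /andP [bk bk'].
  case: (share_common sh) => v [v1 v2].
  by move/negP: kk; apply; apply/eqP; apply: E_inj => //; apply: (in_match HM bk bk' v1 v2).
move: (chk_find (b 0) (b 1) (b 2) (b 3) (b 4) (b 5) (b 6)); rewrite Ecf implyTb.
case/hasP => j; rewrite i20P => hj /allP Hj.
have bitj : forall k, k < 7 -> bit j k = b k.
  by move=> k hk; move: (Hj k); rewrite i7P hk => /(_ isT) /eqP ->; rewrite nthb.
pose o := [ffun i : 'I_6 => [pick l : 'I_n | (6 <= l) && ([set hv i; l] \in M)]].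
have oP : forall (i : 'I_6) (l : 'I_n), 6 <= l -> [set hv i; l] \in M -> o i = Some l.
  move=> i l hl Hin; rewrite ffunE; case: pickP => [l' /andP [hl' Hl']|H]; last first.
    by move: (H l); rewrite hl Hin.
  congr Some; have := in_match HM Hl' Hin (set21 _ _) (set21 _ _) => eq1.
  have : l' \in [set hv i; l] by rewrite -eq1 set22.
  case/set2P => // e1; by move: hl'; rewrite e1 hvK ?ltn_ord // leqNgt ltn_ord.
have oP2 : forall (i : 'I_6) (l : 'I_n), o i = Some l -> 6 <= l /\ [set hv i; l] \in M.
  move=> i l; rewrite ffunE; case: pickP => // l' /andP [h1 h2] [<-]; by split.
have vcov : forall x g, x < 6 -> g \in M -> hv x \in g ->
    covb j x \/ exists2 l : 'I_n, 6 <= l /\ att l = x & g = LE l.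
  move=> x g hx gM vg; case/edgeP: (subsetP Hs g gM) => [[k hk eg]|[l hl eg]].
    left; apply/covbP; exists k; split => //; first by rewrite bitj // /b -eg.
    by apply: hv_in_E => //; rewrite -eg.
  by right; exists l => //; split => //; apply: hv_in_LE => //; rewrite -eg.
exists (Ordinal hj, o); split; last first.
  apply/setP => f; apply/idP/idP => [fM|].
    rewrite inE; case/edgeP: (subsetP Hs f fM) => [[k hk ef]|[l hl ef]].
      by apply/orP; left; apply/HPP; exists k => //; split => //; rewrite bitj // /b -ef.
    apply/orP; right; apply/LPP; exists (Ordinal (Hatt hl)), l => //.
      by apply: oP => //=; rewrite -LE_sym -ef.
    by rewrite ef LE_sym.
  rewrite inE => /orP [/HPP [k [hk hb] ->]|/LPP [i [l hl ->]]].
    by move: hb; rewrite /= bitj.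
  by case: (oP2 _ _ hl).
apply/andP; split.
  apply/allP => k; rewrite i7P => hk; apply/negP => /andP [u1 u2].
  case: (Hc (E k)); first by apply/edgeP; left; exists k.
  move=> g gM /notdisjP [v [vE vg]].
  case/and4P: (edge_fact hk) => h1 h2 _ _.
  have : exists2 x, x < 6 /\ uzc cnt j x & v = hv x.
    by case/set2P: vE => ->; [exists (ea k)|exists (eb k)].
  case=> x [hx /andP [nc /eqP c0]] ev; rewrite ev in vg.
  case: (vcov x g hx gM vg) => [cv|[l [hl al] _]]; first by rewrite cv in nc.
  by move: (cnt_pos hl); rewrite al c0.
apply/forallP => i /=; rewrite /ind; case: (boolP (covb j i)) => hc.
  case E0: (o i) => [l|] //; case: (oP2 _ _ E0) => hl lM.
  case/covbP: hc => k [hk hb he].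
  have Hk : E k \in M by move: hb; rewrite /= bitj.
  have hiE : hv i \in E k by case: he => <-; rewrite /E ?set21 ?set22.
  have := in_match HM Hk lM hiE (set21 _ _) => eq1.
  by move: (leaf_notE hk hl); rewrite eq1 set22.
case E0: (o i) => [l|].
  case: (oP2 _ _ E0) => hl lM; rewrite hl /=.
  case/edgeP: (subsetP Hs _ lM) => [[k hk eq1]|[l' hl' eq1]].
    by move: (leaf_notE hk hl); rewrite -eq1 set22.
  have ll : l = l' by apply: leaf_in_LE => //; rewrite -eq1 set22.
  rewrite -ll in eq1.
  by apply/eqP; apply: hv_in_LE => //; rewrite -eq1 set21.
apply: contraT; rewrite -lt0n card_gt0 => /set0Pn [l]; rewrite inE => /andP [hl /eqP al].
case: (Hc (LE l)); first by apply/edgeP; right; exists l.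
move=> g gM /notdisjP [v [/set2P [ev|ev] vg]].
  case/edgeP: (subsetP Hs g gM) => [[k hk eg]|[l' hl' eg]].
    by move: (leaf_notE hk hl); rewrite -ev -eg vg.
  have ll : l = l' by apply: leaf_in_LE => //; rewrite -ev -eg.
  by rewrite (oP i l hl) // in E0; rewrite -al -LE_sym ll -eg.
rewrite ev al in vg.
case: (vcov i g (ltn_ord i) gM vg) => [cv|[l' [hl' al'] eg]]; first by rewrite cv in hc.
by rewrite (oP i l' hl') // in E0; rewrite -al' -LE_sym -eg.
Qed.

Lemma EinPsi j o k : dm (j, o) -> k < 7 -> (E k \in Psi (j, o)) = bit j k.
Proof.
move=> Hdm hk; apply/idP/idP => [|hb]; last by rewrite inE; apply/orP; left; apply/HPP; exists k.
rewrite inE => /orP [/HPP [k' [hk' hb'] /E_inj ek]|/(LP_LE Hdm) [i [l _ [el hl]]]].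
  by rewrite ek.
by move: (E_neq_LE hk hl); rewrite el eqxx.
Qed.

Lemma oinPsi j o (i : 'I_6) (l : 'I_n) : dm (j, o) ->
  (o i == Some l) = ([set hv i; l] \in Psi (j, o)) && (6 <= l).
Proof.
move=> Hdm; apply/eqP/andP => [E0|[]].
  split; last by case: (ind_some Hdm E0).
  by rewrite inE; apply/orP; right; apply/LPP; exists i, l.
rewrite inE => /orP [/HPP [k [hk _] ek] hl|/LPP [i' [l' E0 ef]] hl].
  by move: (leaf_notE hk hl); rewrite -ek set22.
case: (ind_some Hdm E0) => _ hl' _.
case: (set2_eq ef) => [[e1 e2]|[e1 e2]].
  have ii : i = i' by apply: ord_inj; apply: hv_inj => //; apply: ltn_ord.
  by rewrite ii e2.
by move: hl'; rewrite -e1 hvK ?ltn_ord // leqNgt ltn_ord.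
Qed.

Definition D := [set t | dm t].

Lemma Psi_inj : {in D &, injective Psi}.
Proof.
move=> [j o] [j' o']; rewrite !inE => H1 H2 eP.
have bb : forall k, k < 7 -> bit j k = bit j' k.
  by move=> k hk; rewrite -(EinPsi H1 hk) -(EinPsi H2 hk) eP.
have jj : j = j'.
  apply: ord_inj; apply/eqP; apply: contraT => nj.
  move/allP: chk_rows => /(_ j); rewrite i20P ltn_ord => /(_ isT) /allP /(_ j').
  rewrite i20P ltn_ord nj => /(_ isT) /hasP [k]; rewrite i7P => hk.
  by rewrite bb // eqxx.
subst j'; congr pair; apply/ffunP => i.
have tr : forall o1 o2 l, dm (j, o1) -> dm (j, o2) -> Psi (j, o1) = Psi (j, o2) ->
    o1 i = Some l -> o2 i = Some l.
  move=> o1 o2 l d1 d2 e /eqP; rewrite (oinPsi _ _ d1) e -(oinPsi _ _ d2); by move/eqP.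
case E0: (o i) => [l|]; first by rewrite (tr o o' l).
case E1: (o' i) => [l'|] //.
by rewrite (tr o' o l') // in E0.
Qed.

Lemma MM_eq : maximal_matchings G = Psi @: D.
Proof.
apply/setP => M; rewrite inE; apply/idP/imsetP.
  by case/MM_Psi => t [dt ->]; exists t; rewrite ?inE.
by case=> t; rewrite inE => dt ->; case: t dt => j o; apply: Psi_max.
Qed.

Lemma sum_bool_card (T : finType) (P : pred T) : \sum_(x : T) (P x : nat) = #|[pred x | P x]|.
Proof. by rewrite -sum1_card [RHS]big_mkcond; apply: eq_bigr => x _; rewrite inE; case: (P x). Qed.

Lemma card_Psi j o : dm (j, o) -> #|Psi (j, o)| = Kc cnt j.
Proof.
move=> Hdm; rewrite /Psi cardsU /=.
have -> : HP j :&: LP o = set0.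
  apply/setP => f; rewrite !inE; apply/negP => /andP [/HPP [k [hk _] ->] /(LP_LE Hdm) [i [l _ [el hl]]]].
  by move: (E_neq_LE hk hl); rewrite el eqxx.
rewrite cards0 subn0 /Kc; congr (_ + _).
  rewrite /HP card_in_imset; last by move=> k k' _ _ H; apply: ord_inj; exact: (E_inj (ltn_ord k) (ltn_ord k') H).
  by rewrite -sum_bool_card.
rewrite /LP card_in_imset.
  rewrite -sum_bool_card; apply: eq_bigr => i _.
  case E0: (o i) => [l|] /=.
    by case: (ind_some Hdm E0) => -> hl <-; rewrite cnt_pos.
  case: (boolP (covb j i)) => //= nc.
  by rewrite (ind_none Hdm E0 nc).
move=> i i'; rewrite !inE.
case E0: (o i) => [l|] // _; case E1: (o i') => [l'|] // _ /= ef.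
case: (ind_some Hdm E0) => _ hl _; case: (ind_some Hdm E1) => _ hl' _.
case: (set2_eq ef) => [[e1 _]|[e1 _]].
  by apply: ord_inj; apply: hv_inj => //; apply: ltn_ord.
by move: hl'; rewrite -e1 hvK ?ltn_ord // leqNgt ltn_ord.
Qed.

Lemma prod_bool (T : finType) (P : pred T) : \prod_(x : T) (P x : nat) = [forall x, P x].
Proof.
case: (boolP [forall x, P x]) => [/forallP H|/forallPn [x Hx]].
  by rewrite big1 // => x _; rewrite H.
by rewrite (bigD1 x) //= (negbTE Hx).
Qed.

Lemma sum_ind j (i : 'I_6) : \sum_(x : option 'I_n) (ind j i x : nat) = Wc cnt j i.
Proof.
rewrite sum_option /ind /Wc; case: (covb j i) => /=.
  by rewrite big1.
congr (_ + _); rewrite sum_bool_card /cnt cardsE; apply: eq_card => l; by rewrite !inE.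
Qed.

Lemma sum_dm j : \sum_(o : {ffun 'I_6 -> option 'I_n}) (dm (j, o) : nat) = validc cnt j * \prod_(i < 6) Wc cnt j i.
Proof.
rewrite /dm /=; case: (validc cnt j) => /=; last by rewrite big1.
rewrite mul1n; under eq_bigr do rewrite -prod_bool.
rewrite -(bigA_distr_bigA (fun (i : 'I_6) (x : option 'I_n) => (ind j i x : nat))) /=; apply: eq_bigr => i _; exact: sum_ind.
Qed.

Lemma N_eq : #|maximal_matchings G| = NF cnt.
Proof.
rewrite MM_eq card_in_imset; last exact: Psi_inj.
rewrite /D cardsE -sum_bool_card -(pair_big predT predT (fun j o => (dm (j, o) : nat))) /=.
by apply: eq_bigr => j _; rewrite sum_dm.
Qed.

Lemma S_eq : \sum_(M in maximal_matchings G) #|M| = SF cnt.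
Proof.
rewrite MM_eq big_imset; last exact: Psi_inj.
have -> : (\sum_(t in D) #|Psi t|) = \sum_(j : 'I_20) \sum_(o : {ffun 'I_6 -> option 'I_n}) (if (j, o) \in D then #|Psi (j, o)| else 0).
  by rewrite pair_big big_mkcond; apply: eq_bigr => -[j o] _.
apply: eq_bigr => j _.
have -> : \sum_(o : {ffun 'I_6 -> option 'I_n}) (if (j, o) \in [set t | dm t] then #|Psi (j, o)| else 0)
        = Kc cnt j * \sum_(o : {ffun 'I_6 -> option 'I_n}) (dm (j, o) : nat).
  rewrite big_distrr /=; apply: eq_bigr => o _; rewrite /D inE.
  by case: (boolP (dm (j, o))) => h /=; rewrite ?muln0 ?muln1 ?card_Psi.
by rewrite sum_dm mulnA [Kc _ _ * _]mulnC.
Qed.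

End Frame.

Definition c6 (a b c d e f : nat) (x : nat) := nth 0 [:: a; b; c; d; e; f] x.

Lemma NF_seq c : NF c = \sum_(0 <= j < 20) validc c j * \prod_(0 <= i < 6) Wc c j i.
Proof. rewrite big_mkord; apply: eq_bigr => j _; by rewrite big_mkord. Qed.
Lemma SF_seq c : SF c = \sum_(0 <= j < 20) validc c j * (\sum_(0 <= k < 7) bit j k + \sum_(0 <= i < 6) (~~ covb j i && (c i != 0))) * \prod_(0 <= i < 6) Wc c j i.
Proof. rewrite big_mkord; apply: eq_bigr => j _; by rewrite /Kc !big_mkord. Qed.

Ltac ev := rewrite ?NF_seq ?SF_seq /= !unlock /= /Wc /validc /uzc /c6 /=.

Lemma NT k : NF (c6 0 0 k.+1 0 0 0) = 3 * k.+1 + 7.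
Proof. ev. lia. Qed.
Lemma ST k : SF (c6 0 0 k.+1 0 0 0) = 9 * k.+1 + 15.
Proof. ev. lia. Qed.
Lemma final a b c d : 0 < a+b+c+d -> (9*(a+b+c+d)+15) * NF (c6 a b 0 0 c d) < SF (c6 a b 0 0 c d) * (3*(a+b+c+d)+7).
Proof.
case: a => [|a]; case: b => [|b]; case: c => [|c]; case: d => [|d] // _; ev; nia.
Qed.

Lemma NF_ext c c' : (forall x, x < 6 -> c x = c' x) -> NF c = NF c'.
Proof.
move=> H; rewrite /NF; apply: eq_bigr => j _; congr (_ * _).
  congr nat_of_bool; apply: eq_in_all => k; rewrite i7P => hk.
  by case/and4P: (edge_fact hk) => h1 h2 _ _; rewrite /uzc !H.
by apply: eq_bigr => i _; rewrite /Wc H.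
Qed.

Lemma SF_ext c c' : (forall x, x < 6 -> c x = c' x) -> SF c = SF c'.
Proof.
move=> H; rewrite /SF; apply: eq_bigr => j _; congr (_ * _ * _).
- congr nat_of_bool; apply: eq_in_all => k; rewrite i7P => hk.
  by case/and4P: (edge_fact hk) => h1 h2 _ _; rewrite /uzc !H.
- by rewrite /Kc; congr (_ + _); apply: eq_bigr => i _; rewrite H.
by apply: eq_bigr => i _; rewrite /Wc H.
Qed.

Local Open Scope ring_scope.
Lemma dummy_r : True. Proof. by []. Qed.
Local Close Scope ring_scope.
Lemma card_leaves n : #|[pred l : 'I_n | 6 <= l]| = n - 6.
Proof.
rewrite -sum_bool_card -(big_mkord xpredT (fun l => (6 <= l : nat))).
case: (leqP 6 n) => h6.
  rewrite (big_cat_nat _ (n:=6)) //= big_nat_cond big1; last by move=> i /andP [/andP [_ hi] _]; rewrite leqNgt hi.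
  rewrite add0n big_nat_cond (eq_bigr (fun _ => 1)).
    by rewrite -big_nat_cond sum_nat_const_nat muln1.
  by move=> i /andP [/andP [-> _] _].
rewrite big_nat_cond big1; last by move=> i /andP [/andP [_ hi] _]; rewrite leqNgt (ltn_trans hi h6).
by apply/esym/eqP; rewrite subn_eq0 ltnW.
Qed.

Lemma avm_eq (V : finType) (e : rel V) :
  avm e = ((\sum_(M in maximal_matchings e) #|M|)%:R / #|maximal_matchings e|%:R)%R.
Proof. by []. Qed.

Theorem main_nat (n : nat) (att : nat -> nat) :
  (7 <= n)%N ->
  (forall i : nat, (6 <= i < n)%N -> att i \in [:: 0%N; 1%N; 4%N; 5%N]) ->
  (avm (T1_33 n) < avm (gadj n att))%R.
Proof.
case: n => [//|n'] hn Hmem.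
have Hn : 6 <= n' by [].
have HattG : forall l : 'I_n'.+1, 6 <= l -> att l < 6.
  by move=> l hl; move: (Hmem l); rewrite hl ltn_ord => /(_ isT); rewrite !inE => /or4P [] /eqP ->.
have HattT : forall l : 'I_n'.+1, 6 <= l -> (fun _ : nat => 2) l < 6 by [].
have cG23 : forall x, x = 2 \/ x = 3 -> cnt n' att x = 0.
  move=> x hx; apply/eqP; rewrite cards_eq0; apply/eqP/setP => l; rewrite !inE.
  apply/negP => /andP [hl /eqP ax]; move: (Hmem l); rewrite hl ltn_ord ax => /(_ isT).
  by case: hx => ->.
have kG : cnt n' att 0 + cnt n' att 1 + cnt n' att 4 + cnt n' att 5 = n'.+1 - 6.
  rewrite -card_leaves -sum_bool_card /cnt !cardsE -!sum_bool_card -!big_split /=.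
  apply: eq_bigr => l _; case: (boolP (6 <= l)) => hl //=.
  by move: (Hmem l); rewrite hl ltn_ord => /(_ isT); rewrite !inE => /or4P [] /eqP ->.
have cT : forall x, cnt n' (fun _ => 2) x = if x == 2 then n'.+1 - 6 else 0.
  move=> x; rewrite /cnt; case: (boolP (x == 2)) => [/eqP ->|nx].
    rewrite -card_leaves; apply: eq_card => l; by rewrite !inE eqxx andbT.
  apply/eqP; rewrite cards_eq0; apply/eqP/setP => l; rewrite !inE.
  by apply/negP => /andP [_ /eqP ex]; move: nx; rewrite -ex eqxx.
set k := n'.+1 - 6.
have hk : 0 < k by rewrite /k subn_gt0.
have NTe : #|maximal_matchings (T1_33 n'.+1)| = 3 * k + 7.
  rewrite /T1_33 (N_eq Hn HattT) (@NF_ext _ (c6 0 0 k 0 0 0)); last first.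
    by move=> x hx; rewrite cT; case: x hx => [|[|[|[|[|[|]]]]]].
  by case: (k) hk => // k' _; rewrite NT.
have STe : \sum_(M in maximal_matchings (T1_33 n'.+1)) #|M| = 9 * k + 15.
  rewrite /T1_33 (S_eq Hn HattT) (@SF_ext _ (c6 0 0 k 0 0 0)); last first.
    by move=> x hx; rewrite cT; case: x hx => [|[|[|[|[|[|]]]]]].
  by case: (k) hk => // k' _; rewrite ST.
set a := cnt n' att 0; set b := cnt n' att 1; set c := cnt n' att 4; set d := cnt n' att 5.
have cGe : forall x, x < 6 -> cnt n' att x = c6 a b 0 0 c d x.
  by move=> x; case: x => [|[|[|[|[|[|]]]]]] //= _; apply: cG23; auto.
have NGe : #|maximal_matchings (gadj n'.+1 att)| = NF (c6 a b 0 0 c d).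
  by rewrite (N_eq Hn HattG) (NF_ext cGe).
have SGe : \sum_(M in maximal_matchings (gadj n'.+1 att)) #|M| = SF (c6 a b 0 0 c d).
  by rewrite (S_eq Hn HattG) (SF_ext cGe).
have Hf := final (a := a) (b := b) (c := c) (d := d).
rewrite kG -/k in Hf; have {Hf} Hf := Hf hk.
have NG0 : 0 < NF (c6 a b 0 0 c d).
  rewrite lt0n; apply/negP => /eqP N0.
  move: Hf; rewrite N0 muln0 -SGe.
  rewrite big1 //= => M MM; exfalso.
  by move: NGe; rewrite N0 => /eqP; rewrite cards_eq0 => /eqP E0; rewrite E0 inE in MM.
rewrite !avm_eq NTe STe NGe SGe.
rewrite ltr_pdivrMr ?ltr0n ?addn_gt0 ?orbT // mulrAC ltr_pdivlMr ?ltr0n //.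
by rewrite -!natrM ltr_nat.
Qed.


Local Open Scope ring_scope.

Theorem lemma4p2 (n : nat) (att : nat -> nat) :
  (7 <= n)%N ->
  (forall i : nat, (6 <= i < n)%N -> att i \in [:: 0%N; 1%N; 4%N; 5%N]) ->
  avm (T1_33 n) < avm (gadj n att).
Proof. exact: main_nat. Qed.
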